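(* Let $X$ be a $G$-space and suppose that for some $k>0$ there is a continuous map $\overline{s_k}\colon P(X/G)\to\mathcal{P}_k(X)$ with $\theta_k\circ\overline{s_k}=\mathrm{id}_{P(X/G)}$. Then $\mathrm{TC}^{G,k+2}(X)\le\mathrm{TC}(X/G)$, and consequently $\mathrm{TC}^{G,\infty}(X)\le\mathrm{TC}(X/G)$.
   Context: All spaces are well-pointed CW complexes, $G$ a topological group acting cellularly. $PX$ is the path space with compact-open topology, $\rho_X\colon X\to X/G$ the orbit map. $\mathcal{P}_k(X)=\{(\gamma_1,\dots,\gamma_k)\in(PX)^k\mid G\gamma_i(1)=G\gamma_{i+1}(0),\ 1\le i\le k-1\}$, and $\pi_k\colon\mathcal{P}_k(X)\to X\times X$, $\pi_k(\gamma_1,\dots,\gamma_k)=(\gamma_1(0),\gamma_k(1))$ (a fibration). The (reduced) sectional category $\mathrm{secat}(f)$ of $f\colon E\to B$ is the least $n\ge0$ such that $B$ has an open cover $U_0,\dots,U_n$ with maps $s_i\colon U_i\to E$ satisfying $f\circ s_i\simeq$ inclusion $U_i\hookrightarrow B$. $\mathrm{TC}(Y)=\mathrm{secat}(PY\to Y\times Y,\ \gamma\mapsto(\gamma(0),\gamma(1)))$ (reduced). $\mathrm{TC}^{G,k}(X)=\mathrm{secat}(\pi_k)$; this is non-increasing in $k$, and $\mathrm{TC}^{G,\infty}(X)=\min_{k\ge1}\mathrm{TC}^{G,k}(X)$. The map $\theta_k\colon\mathcal{P}_k(X)\to P(X/G)$ is $\theta_k(\gamma_1,\dots,\gamma_k)=(\rho_X\circ\gamma_1)*\cdots*(\rho_X\circ\gamma_k)$,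 the concatenation of the projected paths. *)

(* Defs.v *)
From HB Require Import structures.
From mathcomp Require Import all_boot all_order all_algebra generic_quotient.
From mathcomp Require Import all_classical all_reals all_analysis.



Unset Printing Implicit Defensive.

Import Order.TTheory GRing.Theory Num.Theory.
Import numFieldNormedType.Exports.
Local Open Scope classical_set_scope.
Local Open Scope ring_scope.


Definition unit_itv (R : realType) : set R := [set x | (0 : R) <= x <= 1].

Notation I01 R := (@set_type R (unit_itv R)).

Lemma toI_subproof (R : realType) (r : R) :
  Num.min 1 (Num.max 0 r) \in unit_itv R.
Proof.
rewrite in_setE /unit_itv /=; apply/andP; split.
  by rewrite le_min ler01 le_max lexx.
by rewrite ge_min lexx.
Qed.

Definition toI (R : realType) (r : R) : I01 R :=
  exist _ (Num.min 1 (Num.max 0 r)) (toI_subproof R r).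

Definition I0 (R : realType) : I01 R := toI R 0.
Definition I1 (R : realType) : I01 R := toI R 1.



Definition path_set (R : realType) (X : topologicalType) :
  set {compact-open, I01 R -> X} :=
  [set f | continuous (f : I01 R -> X)].

Notation PathSp R X := (set_type (@path_set R X)).

Definition pev (R : realType) (X : topologicalType) (p : PathSp R X)
  (t : I01 R) : X := (set_val p : I01 R -> X) t.

Definition path_ends (R : realType) (Y : topologicalType) (p : PathSp R Y) :
  Y * Y := (pev R Y p (I0 R), pev R Y p (I1 R)).

Record gspace (G X : topologicalType) := GSpace {
  gmul : G -> G -> G;
  ginv : G -> G;
  gone : G;
  gmulA : associative gmul;
  gmul1 : left_id gone gmul;
  gmulV : left_inverse gone ginv gmul;
  gmul_cont : continuous (fun p : G * G => gmul p.1 p.2);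
  ginv_cont : continuous ginv;
  act : G -> X -> X;
  act1 : forall x, act gone x = x;
  actM : forall g h x, act (gmul g h) x = act g (act h x);
  act_cont : continuous (fun p : G * X => act p.1 p.2)
}.
Arguments gmul {G X}.
Arguments ginv {G X}.
Arguments gone {G X}.
Arguments gmulA {G X}.
Arguments gmul1 {G X}.
Arguments gmulV {G X}.
Arguments gmul_cont {G X}.
Arguments ginv_cont {G X}.
Arguments act {G X}.
Arguments act1 {G X}.
Arguments actM {G X}.
Arguments act_cont {G X}.

Section orbit_space.
Context {G X : topologicalType} (A : gspace G X).

Definition orbit_rel' (x y : X) : bool := `[< exists g, act A g x = y >].

Lemma orbit_rel_refl : reflexive orbit_rel'.
Proof. by move=> x; apply/asboolP; exists (gone A); rewrite act1. Qed.

Lemma orbit_rel_sym : symmetric orbit_rel'.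
Proof.
have H x y : orbit_rel' x y -> orbit_rel' y x.
  move=> /asboolP[g <-]; apply/asboolP; exists (ginv A g).
  by rewrite -actM gmulV act1.
by move=> x y; apply/idP/idP; apply: H.
Qed.

Lemma orbit_rel_trans : transitive orbit_rel'.
Proof.
move=> y x z /asboolP[g <-] /asboolP[h <-]; apply/asboolP.
by exists (gmul A h g); rewrite actM.
Qed.

Definition orbit_rel := EquivRel _ orbit_rel_refl orbit_rel_sym orbit_rel_trans.

Local Open Scope quotient_scope.
Definition orbit_space := {eq_quot orbit_rel}.
HB.instance Definition _ := Topological.copy orbit_space
  (quotient_topology orbit_space).
HB.instance Definition _ := Quotient.on orbit_space.

Definition rho : X -> orbit_space := \pi_orbit_space.

End orbit_space.

Section Pk.
Context {R : realType} {G : topologicalType} {X : ptopologicalType}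
  (A : gspace G X).

Notation PXk k := {ptws 'I_k -> PathSp R X}.

Definition Pk_set (k : nat) : set (PXk k) :=
  [set gam | forall i j : 'I_k, nat_of_ord j = (nat_of_ord i).+1 ->
     rho A (pev R X (gam i) (I1 R)) = rho A (pev R X (gam j) (I0 R))].

Notation Pk k := (set_type (Pk_set k)).

(* pi_k(gam_1,...,gam_k) = (gam_1(0), gam_k(1)); the default value
   is only used in the degenerate case k = 0 *)
Definition pik (k : nat) (gam : Pk k) : X * X :=
  (match [pick i : 'I_k | nat_of_ord i == 0%N] with
   | Some i => pev R X (set_val gam i) (I0 R) | None => point end,
   match [pick i : 'I_k | nat_of_ord i == k.-1] with
   | Some i => pev R X (set_val gam i) (I1 R) | None => point end).

(* theta_k(gam) = (rho o gam_1) * ... * (rho o gam_k), where the i-th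
   path (i = 0..k-1) is traversed on [i/k, (i+1)/k] *)
Definition theta (k : nat) (gam : 'I_k -> PathSp R X) (t : I01 R) :
    orbit_space A :=
  let j := minn (Num.truncn (k%:R * set_val t)) k.-1 in
  match [pick i : 'I_k | nat_of_ord i == j] with
  | Some i => rho A (pev R X (gam i) (toI R (k%:R * set_val t - (nat_of_ord i)%:R)))
  | None => rho A point
  end.

End Pk.

Notation Pk R A k := (set_type (@Pk_set R _ _ A k)).

(* Reduced sectional category: secat f <= n                            *)
Definition secat_le (R : realType) {E B : topologicalType} (f : E -> B)
    (n : nat) : Prop :=
  exists U : 'I_n.+1 -> set B,
    [/\ forall i, open (U i),
        forall b, exists i, U i b &
        forall i, exists s : B -> E,
          {within U i, continuous s} /\
          exists H : B * R -> B,
            {within U i `*` unit_itv R, continuous H} /\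
            forall b, U i b -> H (b, 0) = f (s b) /\ H (b, 1) = b].

Definition TC_le (R : realType) (Y : topologicalType) (n : nat) : Prop :=
  secat_le R (path_ends R Y) n.

Definition TCG_le (R : realType) {G : topologicalType} {X : ptopologicalType}
    (A : gspace G X) (k n : nat) : Prop :=
  secat_le R (@pik R G X A k) n.

Definition TCGinf_le (R : realType) {G : topologicalType}
    {X : ptopologicalType} (A : gspace G X) (n : nat) : Prop :=
  exists k, (0 < k)%N /\ TCG_le R A k n.

(* Main.v *)
Require Import Defs.
From HB Require Import structures.
From mathcomp Require Import all_boot all_order all_algebra generic_quotient.
From mathcomp Require Import all_classical all_reals all_analysis.
From mathcomp Require Import ring lra zify.
Set Implicit Arguments. Unset Strict Implicit. Unset Printing Implicit Defensive.
Import Order.TTheory GRing.Theory Num.Theory.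
Local Open Scope classical_set_scope.
Local Open Scope ring_scope.
Import numFieldNormedType.Exports.

Definition clamp {R : realType} (r : R) : R := Num.min 1 (Num.max 0 r).

Section prelim.
Variable R : realType.

Lemma clamp_cont : continuous (@clamp R).
Proof.
move=> x.
apply: (@continuous_min R R (fun _ => 1) (fun r => Num.max 0 r)).
  exact: cvg_cst.
apply: (@continuous_max R R (fun _ => 0) id); first exact: cvg_cst.
exact: cvg_id.
Qed.

Lemma toI_cont : continuous (toI R).
Proof.
apply: continuous_comp_initial; exact: clamp_cont.
Qed.

Lemma val_cont : continuous (set_val : I01 R -> R).
Proof. exact: initial_continuous. Qed.

Lemma I01_compact : compact [set: I01 R].
Proof.
have -> : [set: I01 R] = toI R @` `[0, 1]%classic.
  apply/seteqP; split => // t _; exists (set_val t).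
    have := set_valP t; rewrite /unit_itv /= => /andP[a b].
    by rewrite /= in_itv /= a b.
  apply: val_inj => /=; have := set_valP t; rewrite /unit_itv /= => /andP[a b].
  by rewrite (max_idPr a) (min_idPr b).
apply: continuous_compact; last exact: segment_compact.
exact/continuous_subspaceT/toI_cont.
Qed.


Lemma I01_lc : locally_compact [set: I01 R].
Proof.
move=> x _; exists setT; first exact: filterT.
by split; [exact: I01_compact | exact: closedT].
Qed.

Lemma I01_hausdorff : hausdorff_space (I01 R).
Proof.
rewrite open_hausdorff => x y xy.
have vxy : set_val x != set_val y.
  by apply: contra xy => /eqP h; apply/eqP; apply: val_inj.
have := @Rhausdorff R; rewrite open_hausdorff => /(_ _ _ vxy) [[P Q] /= [Px Qy] [oP oQ PQ]].
exists (set_val @^-1` P, set_val @^-1` Q) => /=.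
  by rewrite !inE; split; rewrite -inE.
split.
- by move/continuousP : (@val_cont); apply.
- by move/continuousP : (@val_cont); apply.
- apply/eqP; apply/seteqP; split => // z [] /= a b.
  by have : (P `&` Q) (set_val z) by []; rewrite (eqP PQ).
Qed.

End prelim.

Section glue.
Context {T U : topologicalType}.

Lemma glue_cont (p : T -> bool) (B : set T) (g h : T -> U) :
  closed [set x | p x] -> closed B -> (forall x, ~~ p x -> B x) ->
  (forall x, p x -> B x -> g x = h x) ->
  continuous g -> continuous h ->
  continuous (fun x => if p x then g x else h x).
Proof.
move=> cA cB pB gh cg ch.
apply/continuous_subspace_setT.
have -> : [set: T] = [set x | p x] `|` B.
  apply/seteqP; split => // x _; case: (boolP (p x)) => px; [left | right] => //.
  exact: pB.
apply: withinU_continuous => //.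
  apply: (@subspace_eq_continuous _ _ _ (from_subspace _ g)); last first.
    exact: continuous_subspaceT.
  by move=> x; rewrite inE /= /from_subspace => ->.
apply: (@subspace_eq_continuous _ _ _ (from_subspace _ h)); last first.
  exact: continuous_subspaceT.
move=> x; rewrite inE /= => Bx; rewrite /from_subspace.
by case: (boolP (p x)) => // px; rewrite gh.
Qed.

End glue.

Lemma ptws_cont {Z : topologicalType} {I : Type} {T : topologicalType}
  (f : Z -> {ptws I -> T}) :
  (forall i, continuous (fun z => f z i)) -> continuous f.
Proof.
move=> cf z; apply/cvg_sup => i.
move=> U [?/= [[W oW <-]]] /= Wsfz /filterS; apply; apply: (cf i).
exact: open_nbhs_nbhs.
Qed.



Lemma clamp_id {R : realType} (r : R) : 0 <= r -> r <= 1 -> clamp r = r.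
Proof. by move=> a b; rewrite /clamp (max_idPr a) (min_idPr b). Qed.

Section LemmaA.
Context {R : realType} {Y : topologicalType} (U : set (Y * Y)).
Context (s : Y * Y -> PathSp R Y) (cs : {within U, continuous s}).
Context (H : (Y * Y) * R -> Y * Y) (cH : {within U `*` unit_itv R, continuous H}).
Context (hH : forall b, U b -> H (b, 0) = path_ends R Y (s b) /\ H (b, 1) = b).

Local Notation T := (set_type U).

Lemma piece_H (e : R -> R) : continuous e ->
  continuous (fun p : T * I01 R => H (set_val p.1, clamp (e (set_val p.2)))).
Proof.
move=> ce.
have cHs := (subspace_sigL_continuousP _ _).1 cH.
have mP (p : T * I01 R) : (set_val p.1, clamp (e (set_val p.2))) \in U `*` unit_itv R.
  apply: mem_set; split; first exact: set_valP.
  by have := toI_subproof R (e (set_val p.2)); rewrite in_setE.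
pose m (p : T * I01 R) : set_type (U `*` unit_itv R) := @exist _ (fun x => x \in U `*` unit_itv R) _ (mP p).
have cm : continuous m.
  apply: continuous_comp_initial => p /=.
  apply: (@cvg_pair _ _ _ (nbhs p) (nbhs (set_val p.1)) (nbhs (clamp (e (set_val p.2)))) _ _ _ (fun q : T * I01 R => set_val q.1) (fun q => clamp (e (set_val q.2)))).
    apply: continuous_comp; first exact: cvg_fst.
    exact: initial_continuous.
  have c2 : continuous (fun q : T * I01 R => set_val q.2).
    by move=> q; apply: continuous_comp; [exact: cvg_snd | exact: initial_continuous].
  exact: (continuous_comp (continuous_comp (c2 p) (ce _)) (@clamp_cont R _)).

move=> p; apply: (continuous_comp (cm p) (cHs (m p))).
Qed.


Lemma piece_E (e : R -> R) : continuous e ->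
  continuous (fun p : T * I01 R => pev R Y (s (set_val p.1)) (toI R (e (set_val p.2)))).
Proof.
move=> ce.
have css := (subspace_sigL_continuousP _ _).1 cs.
pose G (u : T) : {compact-open, I01 R -> Y} := set_val (s (set_val u)).
have cG : continuous G.
  move=> u; apply: (continuous_comp (css u)).
  exact: initial_continuous.
have cGu : continuous (uncurry (G : T -> I01 R -> Y)).
  apply: (@continuous_uncurry T (I01 R) Y).
  - exact: I01_lc.
  - exact: I01_hausdorff.
  - exact: cG.
  - move=> u; have := set_valP (s (set_val u)); exact.
have c2 : continuous (fun q : T * I01 R => set_val q.2).
  by move=> q; apply: continuous_comp; [exact: cvg_snd | exact: initial_continuous].
have cm : continuous (fun q : T * I01 R => (q.1, toI R (e (set_val q.2)))).
  move=> q.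
  apply: (@cvg_pair _ _ _ (nbhs q) (nbhs q.1) (nbhs (toI R (e (set_val q.2)))) _ _ _ (fun q : T * I01 R => q.1) (fun q => toI R (e (set_val q.2)))).
    exact: cvg_fst.
  exact: (continuous_comp (continuous_comp (c2 q) (ce _)) (@toI_cont R _)).
move=> q; exact: (continuous_comp (cm q) (cGu _)).
Qed.

Definition Fg (b : Y * Y) (t : I01 R) : Y :=
  let r := set_val t in
  if r <= 3^-1 then (H (b, clamp (-3 * r + 1))).1
  else if r <= 2/3 then pev R Y (s b) (toI R (3 * r + -1))
  else (H (b, clamp (3 * r + -2))).2.

Lemma aff_cont (a c : R) : continuous (fun r : R => a * r + c).
Proof.
move=> x; apply: cvgD; last exact: cvg_cst.
by apply: cvgM; [exact: cvg_cst | exact: cvg_id].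
Qed.

Lemma Fg_cont : continuous (fun p : T * I01 R => Fg (set_val p.1) p.2).
Proof.
have c2 : continuous (fun q : T * I01 R => set_val q.2).
  by move=> q; apply: continuous_comp; [exact: cvg_snd | exact: initial_continuous].
have cle c : closed [set q : T * I01 R | set_val q.2 <= c].
  have h := (continuous_closedP _).1 c2 _ (@closed_le _ c). exact: h.
have cge c : closed [set q : T * I01 R | c <= set_val q.2].
  exact: ((continuous_closedP _).1 c2 _ (@closed_ge _ c)).
have pH a c := piece_H (@aff_cont a c).
have pE a c := piece_E (@aff_cont a c).
rewrite /Fg /=.
apply: (glue_cont (p := fun q : T * I01 R => set_val q.2 <= 3^-1) (B := [set q | 3^-1 <= set_val q.2])
  (g := fun q => (H (set_val q.1, clamp (-3 * set_val q.2 + 1))).1)).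
- exact: cle.
- exact: cge.
- by move=> q /=; rewrite -ltNge => /ltW.
- move=> q /= h1 h2.
  have r13 : set_val q.2 = 3^-1 by apply/le_anti; rewrite h1 h2.
  have -> : set_val q.2 <= 2/3 by rewrite r13; lra.
  rewrite r13.
  have -> : -3 * 3^-1 + 1 = 0 :> R by field; rewrite ?pnatr_eq0.
  have -> : 3 * 3^-1 + -1 = 0 :> R by field; rewrite ?pnatr_eq0.
  rewrite clamp_id ?lexx ?ler01 //.
  by have := hH (set_valP q.1); case=> -> _.
- move=> q; apply: (continuous_comp (pH (-3) 1 q)); exact: cvg_fst.
apply: (glue_cont (p := fun q : T * I01 R => set_val q.2 <= 2/3) (B := [set q | 2/3 <= set_val q.2])
  (g := fun q => pev R Y (s (set_val q.1)) (toI R (3 * set_val q.2 + -1)))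
  (h := fun q => (H (set_val q.1, clamp (3 * set_val q.2 + -2))).2)).
- exact: cle.
- exact: cge.
- by move=> q /=; rewrite -ltNge => /ltW.
- move=> q /= h1 h2.
  have r23 : set_val q.2 = 2/3 by apply/le_anti; rewrite h1 h2.
  rewrite r23.
  have -> : 3 * (2/3) + -2 = 0 :> R by field; rewrite ?pnatr_eq0.
  have -> : 3 * (2/3) + -1 = 1 :> R by field; rewrite ?pnatr_eq0.
  rewrite clamp_id ?lexx ?ler01 //.
  by have := hH (set_valP q.1); case=> -> _.
- move=> q; exact: (pE 3 (-1) q).
- move=> q; apply: (continuous_comp (pH 3 (-2) q)); exact: cvg_snd.
Qed.

Lemma cst_path_cont (y : Y) : continuous (fun _ : I01 R => y).
Proof. exact: cst_continuous. Qed.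

Definition pathify (f : I01 R -> Y) : PathSp R Y :=
  match pselect (continuous f) with
  | left h => @exist _ (fun x => x \in path_set R Y) f (mem_set h)
  | right _ => @exist _ (fun x => x \in path_set R Y) (fun _ => f (I0 R))
                 (mem_set (@cst_path_cont (f (I0 R))))
  end.

Lemma pathifyE (f : I01 R -> Y) : continuous f -> set_val (pathify f) = f.
Proof. by move=> cf; rewrite /pathify; case: (pselect (continuous f)). Qed.

Definition qf (b : Y * Y) : PathSp R Y := pathify (Fg b).

Lemma Fg_b_cont (b : Y * Y) : U b -> continuous (Fg b).
Proof.
move=> Ub; have bU : b \in U by exact: mem_set.
pose u : T := @exist _ (fun x => x \in U) b bU.
have -> : Fg b = (fun p : T * I01 R => Fg (set_val p.1) p.2) \o (fun t => (u, t)) by [].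
move=> t; apply: continuous_comp; last exact: Fg_cont.
apply: (@cvg_pair _ _ _ (nbhs t) (nbhs u) (nbhs t) _ _ _ (fun _ => u) id).
  exact: cvg_cst.
exact: cvg_id.
Qed.

Lemma qf_val (b : Y * Y) : U b -> set_val (qf b) = Fg b.
Proof. by move=> Ub; rewrite /qf pathifyE //; exact: Fg_b_cont. Qed.

Lemma qf_cont : {within U, continuous qf}.
Proof.
apply/subspace_sigL_continuousP.
apply: continuous_comp_initial.
have -> : set_val \o sigL U qf =
    curry (fun p : T * I01 R => Fg (set_val p.1) p.2).
  apply/funext => u /=; rewrite /sigL /= qf_val //; exact: set_valP.
exact: (continuous_curry_fun Fg_cont).
Qed.

Lemma qf_ends (b : Y * Y) : U b ->
  pev R Y (qf b) (I0 R) = b.1 /\ pev R Y (qf b) (I1 R) = b.2.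
Proof.
move=> Ub; rewrite /pev qf_val // /Fg /=.
have -> : set_val (I0 R) = 0 by exact: (@clamp_id R 0 (lexx _) ler01).
have -> : set_val (I1 R) = 1 by exact: (@clamp_id R 1 ler01 (lexx _)).
rewrite mulr0 add0r invr_ge0 ler0n mulr1.
have -> : (1 <= 3^-1 :> R) = false by apply/negbTE; rewrite -ltNge; lra.
have -> : (1 <= 2/3 :> R) = false by apply/negbTE; rewrite -ltNge; lra.
have -> : 3 + -2 = 1 :> R by lra.
by rewrite clamp_id ?ler01 // (hH Ub).2.
Qed.

End LemmaA.

Section Main.
Context (R : realType) (G : topologicalType) (X : ptopologicalType) (A : gspace G X).
Context (k : nat) (hk : (0 < k)%N).

Lemma val_I0 : set_val (I0 R) = 0.
Proof. exact: (@clamp_id R 0 (lexx _) ler01). Qed.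
Lemma val_I1 : set_val (I1 R) = 1.
Proof. exact: (@clamp_id R 1 ler01 (lexx _)). Qed.

Let hk1 : (k.-1 < k)%N := (eq_ind_r is_true hk (ltn_predL k)).

Lemma theta_0 (gam : 'I_k -> PathSp R X) :
  theta A k gam (I0 R) = rho A (pev R X (gam (Ordinal hk)) (I0 R)).
Proof.
rewrite /theta val_I0 mulr0 truncn0 min0n.
case: pickP => [i /eqP i0 | none]; last by have := none (Ordinal hk).
have -> : i = Ordinal hk by apply: val_inj.
by rewrite /= subr0.
Qed.

Lemma theta_1 (gam : 'I_k -> PathSp R X) :
  theta A k gam (I1 R) =
  rho A (pev R X (gam (Ordinal hk1)) (I1 R)).
Proof.
rewrite /theta val_I1 mulr1 natrK.
have -> : minn k k.-1 = k.-1 by apply/minn_idPr; exact: leq_pred.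
case: pickP => [i /eqP i0 | none]; last by have := none (Ordinal hk1); rewrite /= eqxx.
have -> : i = Ordinal hk1 by apply: val_inj.
congr (rho A (pev R X _ _)); apply: val_inj => /=.
have -> : k%:R - (k.-1)%:R = 1 :> R.
  by rewrite -{1}(prednK hk) -addn1 natrD addrAC subrr add0r.
by [].
Qed.

Context (sbar : PathSp R (orbit_space A) -> Pk R A k) (sbar_cont : continuous sbar)
  (sbar_sec : forall p : PathSp R (orbit_space A),
     theta A k (set_val (sbar p)) = (set_val p : I01 R -> orbit_space A)).

Local Notation Y := (orbit_space A).

Definition rr (b : X * X) : Y * Y := (rho A b.1, rho A b.2).

Lemma rho_cont : continuous (rho A).
Proof. exact: pi_continuous. Qed.

Lemma rr_cont : continuous rr.
Proof.
move=> b; apply: (@cvg_pair _ _ _ (nbhs b) (nbhs (rho A b.1)) (nbhs (rho A b.2)) _ _ _ (fun b : X * X => rho A b.1) (fun b => rho A b.2)).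
  apply: continuous_comp; [exact: cvg_fst | exact: rho_cont].
apply: continuous_comp; [exact: cvg_snd | exact: rho_cont].
Qed.

Lemma cstc (x : X) : continuous (fun _ : I01 R => x).
Proof. exact: cst_continuous. Qed.

Definition cstP (x : X) : PathSp R X :=
  @exist _ (fun f => f \in path_set R X) (fun _ => x) (mem_set (@cstc x)).

Lemma cstP_cont : continuous cstP.
Proof.
apply: continuous_comp_initial.
have -> : set_val \o cstP = curry (fun p : X * I01 R => p.1) by [].
apply: continuous_curry_fun => p; exact: cvg_fst.
Qed.

Definition raw (Q : X * X -> PathSp R Y) (b : X * X) : {ptws 'I_k.+2 -> PathSp R X} :=
  fun j => if (j : nat) == 0%N then cstP b.1
           else match (insub (j : nat).-1 : option 'I_k) with
                | Some i => set_val (sbar (Q b)) i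
                | None => cstP b.2
                end.

Lemma raw_Pk (Q : X * X -> PathSp R Y) (b : X * X)
  (h0 : pev R Y (Q b) (I0 R) = rho A b.1) (h1 : pev R Y (Q b) (I1 R) = rho A b.2) :
  Pk_set A k.+2 (raw Q b).
Proof.
set gam := set_val (sbar (Q b)).
have hg : Pk_set A k gam by have := set_valP (sbar (Q b)).
have e0 : rho A (pev R X (gam (Ordinal hk)) (I0 R)) = rho A b.1.
  by rewrite -theta_0 /gam sbar_sec.
have e1 : rho A (pev R X (gam (Ordinal hk1)) (I1 R)) = rho A b.2.
  by rewrite -theta_1 /gam sbar_sec.
move=> i j; rewrite /raw.
case: i => [[|i'] hi] /= hij; rewrite hij /=.
  case: insubP => [u _ uv | nk]; last by rewrite hk in nk.
  have -> : u = Ordinal hk by apply: val_inj.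
  by rewrite -e0.
have i'k : (i' < k)%N.
  by have := ltn_ord j; rewrite hij.
case: insubP => [u _ uv | nu]; last by rewrite i'k in nu.
case: insubP => [w _ wv | nw].
  by apply: hg; rewrite wv uv.
have uk : u = Ordinal hk1.
  apply: val_inj => /=; rewrite uv.
  move: nw i'k hk; rewrite -leqNgt; lia.
by rewrite uk e1.
Qed.

Lemma pik_raw (Q : X * X -> PathSp R Y) (b : X * X) (g : Pk R A k.+2) :
  set_val g = raw Q b -> pik A k.+2 g = b.
Proof.
move=> ge; rewrite /pik ge /raw.
case: pickP => [i /eqP i0 | none]; last by have := none ord0.
rewrite i0 eqxx.
case: pickP => [i2 /eqP ik | none]; last by have := none ord_max; rewrite /= eqxx.
rewrite ik /=.
case: insubP => [u ku _ | _]; first by rewrite ltnn in ku.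
by case: b ge.
Qed.

Lemma ptP : Pk_set A k.+2 (fun _ => cstP point).
Proof. by move=> i j _. Qed.

Lemma mainA (n : nat) : TC_le R Y n -> TCG_le R A k.+2 n.
Proof.
case=> U [oU cov sec].
exists (fun i => rr @^-1` U i); split.
- by move=> i; move/continuousP: rr_cont; apply.
- by move=> b; have [i Ui] := cov (rr b); exists i.
move=> i; have [s [cs [H [cH hH]]]] := sec i.
set V := rr @^-1` U i.
have oV : open V by move/continuousP: rr_cont; apply.
pose Q b := qf s H (rr b).
have QE b : V b -> pev R Y (Q b) (I0 R) = rho A b.1 /\ pev R Y (Q b) (I1 R) = rho A b.2.
  by move=> Vb; exact: (qf_ends cs cH hH Vb).
have Qc : {in V, continuous Q}.
  have qc := qf_cont cs cH hH.
  rewrite continuous_open_subspace // in qc.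
  move=> b /set_mem Vb.
  exact: (continuous_comp (@rr_cont b) (qc (rr b) (mem_set Vb))).
pose s' b : Pk R A k.+2 :=
  match pselect (Pk_set A k.+2 (raw Q b)) with
  | left h => @exist _ (fun x => x \in Pk_set A k.+2) (raw Q b) (mem_set h)
  | right _ => @exist _ (fun x => x \in Pk_set A k.+2) (fun _ => cstP point) (mem_set ptP)
  end.
have s'E b : V b -> set_val (s' b) = raw Q b.
  move=> Vb; rewrite /s'; case: (pselect _) => // nP.
  by exfalso; apply: nP; have [h0 h1] := QE b Vb; exact: raw_Pk.
exists s'; split.
  apply: continuous_comp_initial.
  apply: (@subspace_eq_continuous _ V _ (from_subspace V (raw Q))).
    by move=> b /set_mem Vb; rewrite /from_subspace /= s'E.
  apply: ptws_cont => j.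
  have : {within V, continuous (fun b => raw Q b j)}; last exact.
  rewrite continuous_open_subspace // => b /set_mem Vb.
  rewrite /raw; case: (nat_of_ord j == 0%N).
    by apply: (@continuous_comp _ _ _ fst cstP); [exact: cvg_fst | exact: cstP_cont].
  case: (insub (nat_of_ord j).-1) => [u|]; last first.
    by apply: (@continuous_comp _ _ _ snd cstP); [exact: cvg_snd | exact: cstP_cont].
  apply: (@continuous_comp _ _ _ Q (fun p => set_val (sbar p) u) b (Qc b (mem_set Vb))).
  apply: (@continuous_comp _ _ _ sbar (fun g => set_val g u)); first exact: sbar_cont.
  apply: (@continuous_comp (Pk R A k) {ptws 'I_k -> PathSp R X} (PathSp R X) set_val (fun f => f u) (sbar (Q b))); first exact: initial_continuous.
  exact: proj_continuous.
exists (fun p : (X * X) * R => p.1); split.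
  by apply: continuous_subspaceT => p; exact: cvg_fst.
move=> b Vb; split => //=.
by rewrite (pik_raw (s'E b Vb)).
Qed.

End Main.

Unset Implicit Arguments.

Theorem mainTheorem3 (R : realType) (G : topologicalType)
  (X : ptopologicalType) (A : gspace G X) (k : nat) (hk : (0 < k)%N)
  (sbar : PathSp R (orbit_space A) -> Pk R A k)
  (sbar_cont : continuous sbar)
  (sbar_sec : forall p : PathSp R (orbit_space A),
     theta A k (set_val (sbar p)) = (set_val p : I01 R -> orbit_space A)) :
  (forall n : nat, TC_le R (orbit_space A) n -> TCG_le R A k.+2 n) /\
  (forall n : nat, TC_le R (orbit_space A) n -> TCGinf_le R A n).
Proof.
have h1 : forall n : nat, TC_le R (orbit_space A) n -> TCG_le R A k.+2 n.
  move=> n; exact: (@mainA R G X A k hk sbar sbar_cont sbar_sec n).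
split => // n hn; exists k.+2; split => //; exact: h1.
Qed.
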